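(* Assume $\mathcal L$ fulfills the specification property. Let $k\in\mathbb N$ and $\mathbf q_1,\ldots,\mathbf q_m\in\mathrm S_k$. For every $\varepsilon>0$ and every $\omega_0\in\mathcal L$ there exist $\omega\in\mathcal L$ having $\omega_0$ as a prefix and integers $n_1<n_2<\cdots<n_m$ such that $\|\mathrm P_k(\omega,n_i)-\mathbf q_i\|_1\le\varepsilon$ for all $1\le i\le m$.
   Context: $X\subseteq\Sigma^{\mathbb N}$, $\Sigma=\{0,\dots,N-1\}$, is the one-sided shift generated by a topological partition of a compact metric space under a continuous map; $\mathcal L$ is its language and $\mathcal L_k$ the words of length $k$. Specification property: there is $j\ge0$ such that for all $\mathbf a,\mathbf b\in\mathcal L$ there is $\mathbf u\in\mathcal L$ with $|\mathbf u|\le j$ and $\mathbf a\mathbf u\mathbf b\in\mathcal L$. For a word $\omega=a_1a_2\ldots$, block $\mathbf b$ of length $k$ and $n$ at most (length minus $k-1$), $\mathrm P(\omega,\mathbf b,n)=\frac1n|\{0\le i<n:a_{i+1}\ldots a_{i+k}=\mathbf b\}|$ and $\mathrm P_k(\omega,n)=(\mathrm P(\omega,\mathbf b,n))_{\mathbf b\in\mathcal L_k}$. $\mathrm S_k$ is the union over $\omega\in X$ of the sets of $\ell^1$-accumulation points of $(\mathrm P_k(\omega,n))_n$. *)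

(* Defs.v *)
From Stdlib Require Import Reals List Arith Lia.
Import ListNotations.
Open Scope R_scope.

(* Alphabet Sigma = {0,...,N-1}; points of Sigma^N are functions nat -> nat,
   finite words are lists of nat.  Positions are 0-indexed here:
   the paper's a_{i+1}...a_{i+k} is x i ... x (i+k-1). *)

Fixpoint words (N k : nat) : list (list nat) :=
  match k with
  | O => [ [] ]
  | S k' => flat_map (fun w => map (fun a => a :: w) (seq 0 N)) (words N k')
  end.

Definition block (x : nat -> nat) (i l : nat) : list nat :=
  map (fun j => x (i + j)%nat) (seq 0 l).

Fixpoint occ (x : nat -> nat) (b : list nat) (n : nat) : nat :=
  match n with
  | O => O
  | S n' => (occ x b n' +
             if list_eq_dec Nat.eq_dec (block x n' (length b)) b then 1 else 0)%nat
  end.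

Definition Pfreq (x : nat -> nat) (b : list nat) (n : nat) : R :=
  INR (occ x b n) / INR n.

(* a finite word seen as a sequence (only positions < length are used) *)
Definition wseq (w : list nat) : nat -> nat := fun i => nth i w O.

Definition l1dist (N k : nat) (p q : list nat -> R) : R :=
  fold_right Rplus 0 (map (fun b => Rabs (p b - q b)) (words N k)).

Definition lang (X : (nat -> nat) -> Prop) (w : list nat) : Prop :=
  exists x i, X x /\ block x i (length w) = w.

Definition is_shift (N : nat) (X : (nat -> nat) -> Prop) : Prop :=
  (forall x, X x -> forall i, (x i < N)%nat) /\
  (forall x, X x -> X (fun i => x (S i))) /\
  (forall x, (forall n, exists y, X y /\ forall i, (i < n)%nat -> y i = x i) -> X x).

Definition specification (X : (nat -> nat) -> Prop) : Prop :=
  exists j : nat, forall a b, lang X a -> lang X b ->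
    exists u, lang X u /\ (length u <= j)%nat /\ lang X (a ++ u ++ b).

Definition accum (N k : nat) (x : nat -> nat) (q : list nat -> R) : Prop :=
  forall eps, eps > 0 -> forall n0 : nat, exists n : nat,
    (n0 <= n)%nat /\ (1 <= n)%nat /\ l1dist N k (fun b => Pfreq x b n) q < eps.

Definition Sk (N : nat) (X : (nat -> nat) -> Prop) (k : nat) (q : list nat -> R) : Prop :=
  exists x, X x /\ accum N k x q.

(* Main.v *)
Require Import Defs.
From Stdlib Require Import Reals List Arith Lia Lra.
Import ListNotations.
Open Scope R_scope.

Lemma block_length x i l : length (block x i l) = l.
Proof. unfold block. rewrite length_map, length_seq. reflexivity. Qed.

Lemma nth_block x i l d z : (d < l)%nat -> nth d (block x i l) z = x (i + d)%nat.
Proof.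
  intros H. unfold block.
  rewrite (nth_indep _ z ((fun j => x (i+j)%nat) 0%nat)) by (rewrite length_map, length_seq; lia).
  rewrite (map_nth (fun j => x (i+j)%nat)). rewrite seq_nth by lia. f_equal.
Qed.

Lemma occ_le x b n : (occ x b n <= n)%nat.
Proof. induction n; simpl; [lia|]. destruct list_eq_dec; lia. Qed.

Lemma block_ext x y i l : (forall j, (j < l)%nat -> x (i+j)%nat = y (i+j)%nat) ->
  block x i l = block y i l.
Proof.
  intros H. unfold block. apply map_ext_in. intros a Ha. apply in_seq in Ha. apply H; lia.
Qed.

Lemma occ_prefix w v b n : (n + length b <= length w + 1)%nat ->
  occ (wseq (w ++ v)) b n = occ (wseq w) b n.
Proof.
  induction n; intros H; simpl; [reflexivity|].
  rewrite IHn by lia.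
  rewrite (block_ext (wseq (w ++ v)) (wseq w)); [reflexivity|].
  intros j Hj. unfold wseq. apply app_nth1. lia.
Qed.

Lemma occ_shift pre x M b t : (t + length b <= M + 1)%nat ->
  occ (wseq (pre ++ block x 0 M)) b (length pre + t) =
  (occ (wseq (pre ++ block x 0 M)) b (length pre) + occ x b t)%nat.
Proof.
  induction t; intros H.
  - simpl. rewrite Nat.add_0_r. lia.
  - replace (length pre + S t)%nat with (S (length pre + t)) by lia.
    simpl. rewrite IHt by lia.
    replace (block (wseq (pre ++ block x 0 M)) (length pre + t) (length b))
      with (block x t (length b)).
    + destruct list_eq_dec; lia.
    + unfold block. apply map_ext_in. intros a Ha. apply in_seq in Ha.
      unfold wseq. rewrite <- Nat.add_assoc, app_nth2_plus. fold (block x 0 M).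
      rewrite nth_block by lia. reflexivity.
Qed.

Lemma words_length N k b : In b (words N k) -> length b = k.
Proof.
  revert b; induction k; simpl; intros b H.
  - destruct H as [H|[]]. subst. reflexivity.
  - apply in_flat_map in H. destruct H as [w [Hw Hb]].
    apply in_map_iff in Hb. destruct Hb as [a [Ha _]]. subst. simpl. f_equal. auto.
Qed.

Lemma sum_bound (l : list (list nat)) (f g : list nat -> R) c :
  (forall b, In b l -> f b <= g b + c) ->
  fold_right Rplus 0 (map f l) <= fold_right Rplus 0 (map g l) + INR (length l) * c.
Proof.
  induction l; cbn [map fold_right length]; intros H.
  - simpl INR. lra.
  - rewrite S_INR. pose proof (H a (or_introl eq_refl)).
    assert (fold_right Rplus 0 (map f l) <= fold_right Rplus 0 (map g l) + INR (length l) * c)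
      by (apply IHl; intros; apply H; right; auto).
    lra.
Qed.

Lemma real_bound (A B s t : nat) : (1 <= t)%nat -> (A <= s)%nat -> (B <= t)%nat ->
  Rabs (INR (A + B) / INR (s + t) - INR B / INR t) <= INR s / INR t.
Proof.
  intros Ht HA HB. rewrite !plus_INR.
  apply le_INR in HA. apply le_INR in HB. apply le_INR in Ht. simpl in Ht.
  assert (Hs0 : 0 <= INR s) by apply pos_INR.
  assert (HB0 : 0 <= INR B) by apply pos_INR.
  assert (HA0 : 0 <= INR A) by apply pos_INR.
  set (a := INR A) in *. set (b := INR B) in *. set (s' := INR s) in *. set (t' := INR t) in *.
  assert (E : (a + b) / (s' + t') - b / t' = (a * t' - b * s') / (t' * (s' + t'))) by (field; lra).
  rewrite E. apply Rabs_le. split.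
  - apply (Rmult_le_reg_r (t' * (s' + t'))). nra.
    unfold Rdiv. rewrite Rmult_assoc, Rinv_l by nra.
    replace (- (s' * / t') * (t' * (s' + t'))) with (- (s' * (s' + t'))) by (field; lra).
    nra.
  - apply (Rmult_le_reg_r (t' * (s' + t'))). nra.
    unfold Rdiv. rewrite Rmult_assoc, Rinv_l by nra.
    replace (s' * / t' * (t' * (s' + t'))) with (s' * (s' + t')) by (field; lra).
    nra.
Qed.

Lemma build (N : nat) (X : (nat -> nat) -> Prop) :
    specification X ->
    forall (k : nat) (q : nat -> list nat -> R) (eps : R), eps > 0 ->
      forall w0 : list nat, lang X w0 ->
      forall m, (forall i, (1 <= i <= m)%nat -> Sk N X k (q i)) ->
      exists (w : list nat) (n : nat -> nat),
        lang X w /\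
        (exists t, w = w0 ++ t) /\
        (forall i, (1 <= i < m)%nat -> (n i < n (S i))%nat) /\
        (forall i, (1 <= i <= m)%nat ->
           (1 <= n i)%nat /\ (n i + k <= length w + 1)%nat /\
           l1dist N k (fun b => Pfreq (wseq w) b (n i)) (q i) <= eps).
Proof.
  intros [j Hj] k q eps Heps w0 Hw0 m. induction m; intros HSk.
  - exists w0, (fun _ => 0%nat). split; [exact Hw0|]. split; [exists []; rewrite app_nil_r; reflexivity|].
    split; intros; lia.
  - destruct IHm as [w [n [Hw [[t0 Ht0] [Hmono Hn]]]]].
    { intros i Hi. apply HSk. lia. }
    destruct (HSk (S m)) as [x [Xx Hacc]]. lia.
    set (L := length (words N k)).
    set (S0 := (length w + j)%nat).
    destruct (INR_unbounded (2 * INR L * INR S0 / eps)) as [n0 Hn0].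
    destruct (Hacc (eps/2) ltac:(lra) (Nat.max n0 2)) as [t [Ht1 [Ht2 Hdist]]].
    set (bl := block x 0 (t + k)).
    assert (Hbl : lang X bl) by (exists x, 0%nat; split; [exact Xx|]; unfold bl; rewrite block_length; reflexivity).
    destruct (Hj w bl Hw Hbl) as [u [Hu [Hlu Hwub]]].
    set (s := (length w + length u)%nat).
    exists (w ++ u ++ bl), (fun i => if Nat.eqb i (S m) then (s + t)%nat else n i).
    assert (Hlen : length (w ++ u ++ bl) = (s + t + k)%nat)
      by (unfold s, bl; rewrite !length_app, block_length; lia).
    split; [exact Hwub|]. split.
    { exists (t0 ++ u ++ bl). rewrite Ht0, <- app_assoc. reflexivity. }
    split.
    + intros i Hi.
      destruct (Nat.eqb_spec i (S m)); [lia|].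
      destruct (Nat.eqb_spec (S i) (S m)).
      * assert (i = m) by lia. subst i.
        destruct (Hn m ltac:(lia)) as [_ [H2 _]]. unfold s. lia.
      * apply Hmono. lia.
    + intros i Hi. destruct (Nat.eqb_spec i (S m)).
      * subst i. split; [lia|]. split; [lia|].
        unfold l1dist.
        eapply Rle_trans.
        { apply (sum_bound _ _ (fun b => Rabs (Pfreq x b t - q (S m) b)) (INR S0 / INR t)).
          intros b Hb. apply words_length in Hb.
          assert (E : Pfreq (wseq (w ++ u ++ bl)) b (s + t) =
             INR (occ (wseq ((w ++ u) ++ bl)) b s + occ x b t) / INR (s + t)).
          { unfold Pfreq. rewrite app_assoc. f_equal. f_equal.
            unfold s. rewrite <- length_app. apply occ_shift. lia. }
          rewrite E.
          pose proof (real_bound (occ (wseq ((w ++ u) ++ bl)) b s) (occ x b t) s t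
            ltac:(lia) (occ_le _ _ _) (occ_le _ _ _)) as RB.
          assert (INR s / INR t <= INR S0 / INR t).
          { unfold Rdiv. apply Rmult_le_compat_r.
            - apply Rlt_le, Rinv_0_lt_compat, lt_0_INR. lia.
            - apply le_INR. unfold s, S0. lia. }
          pose proof (Rabs_triang (INR (occ (wseq ((w ++ u) ++ bl)) b s + occ x b t) / INR (s + t) - Pfreq x b t)
                                  (Pfreq x b t - q (S m) b)).
          replace (INR (occ (wseq ((w ++ u) ++ bl)) b s + occ x b t) / INR (s + t) - Pfreq x b t +
              (Pfreq x b t - q (S m) b)) with
              (INR (occ (wseq ((w ++ u) ++ bl)) b s + occ x b t) / INR (s + t) - q (S m) b) in * by ring.
          unfold Pfreq in *. lra. }
        fold (l1dist N k (fun b => Pfreq x b t) (q (S m))). fold L.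
        assert (INR L * (INR S0 / INR t) <= eps / 2).
        { assert (Htp : 0 < INR t) by (apply lt_0_INR; lia).
          assert (INR n0 <= INR t) by (apply le_INR; lia).
          assert (2 * INR L * INR S0 < eps * INR t).
          { assert (2 * INR L * INR S0 / eps * eps = 2 * INR L * INR S0) by (field; lra).
            nra. }
          apply (Rmult_le_reg_r (INR t)); [exact Htp|].
          replace (INR L * (INR S0 / INR t) * INR t) with (INR L * INR S0) by (field; lra).
          lra. }
        lra.
      * destruct (Hn i ltac:(lia)) as [H1 [H2 H3]].
        split; [lia|]. split; [rewrite Hlen; unfold s in *; rewrite length_app in Hlen; lia|].
        unfold l1dist in *. erewrite map_ext_in; [exact H3|].
        intros b Hb. simpl. unfold Pfreq. rewrite occ_prefix; [reflexivity|].
        rewrite (words_length _ _ _ Hb). lia.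
Qed.

Theorem mainTheorem5 :
  forall (N : nat) (X : (nat -> nat) -> Prop),
    is_shift N X ->
    specification X ->
    forall (k m : nat) (q : nat -> list nat -> R),
      (forall i, (1 <= i <= m)%nat -> Sk N X k (q i)) ->
      forall eps : R, eps > 0 ->
      forall w0 : list nat, lang X w0 ->
      exists (w : list nat) (n : nat -> nat),
        lang X w /\
        (exists t, w = w0 ++ t) /\
        (forall i, (1 <= i < m)%nat -> (n i < n (S i))%nat) /\
        (forall i, (1 <= i <= m)%nat ->
           (1 <= n i)%nat /\ (n i + k <= length w + 1)%nat /\
           l1dist N k (fun b => Pfreq (wseq w) b (n i)) (q i) <= eps).
Proof.
  intros N X _ Hsp k m q Hq eps Heps w0 Hw0.
  exact (build N X Hsp k q eps Heps w0 Hw0 m Hq).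
Qed.
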